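(* Let $X$ be any one of the random Fibonacci subshift $X_{\vartheta_1}$, the random tribonacci subshift $X_\tau$, or the degree-$m$ random metallic mean subshift $X_{\vartheta_m}$ ($m\ge2$). Then $X$ is semi-mixing with respect to the set $\mathcal{S}=\{a\}$ of length-one words.
   Context: For a random substitution $\vartheta$ (a map assigning to each letter a non-empty finite set of non-empty words, extended to words via set concatenation $\vartheta(w_1\cdots w_k)=\vartheta(w_1)\cdots\vartheta(w_k)$), a word is $\vartheta$-legal if it is a subword of some word in $\vartheta^k(a)$ for some $k\ge0$ and letter $a$. $X_\vartheta$ is the set of bi-infinite sequences all of whose finite subwords are $\vartheta$-legal; $\mathcal{L}$ is its language (set of finite subwords of its elements), $\mathcal{L}^\ell$ those of length $\ell$. A subshift is semi-mixing with respect to $\mathcal{S}\subsetneq\mathcal{L}^\ell$ if for every $w\in\mathcal{L}$ there is $N$ such that for every $n\ge N$ there exist a word $u$ of length $n$ and $s\in\mathcal{S}$ with $wus\in\mathcal{L}$. $\vartheta_1\colon a\mapsto\{ab,ba\},\ b\mapsto\{a\}$; $\tau\colon a\mapsto\{ab,ba\},\ b\mapsto\{ac,ca\},\ c\mapsto\{a\}$; $\vartheta_m\colon a\mapsto\{a^iba^{m-i}\mid0\le i\le m\},\ b\mapsto\{a\}$. *)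

(* Defs.v *)
From HB Require Import structures.
From mathcomp Require Import all_boot all_order all_algebra.
From Stdlib Require List.
Set Implicit Arguments. Unset Strict Implicit. Unset Printing Implicit Defensive.
Import GRing.Theory Num.Theory.

Definition rsubst (A : Type) := A -> seq (seq A).

(* v \in theta(w), where theta(w1...wk) = theta(w1)...theta(wk) (set concatenation). *)
Fixpoint img (A : Type) (th : rsubst A) (w v : seq A) : Prop :=
  match w with
  | [::] => v = [::]
  | a :: w' => exists u v', List.In u (th a) /\ v = u ++ v' /\ img th w' v'
  end.

(* v \in theta^k(a), with theta extended to sets of words by union. *)
Fixpoint img_iter (A : Type) (th : rsubst A) (k : nat) (a : A) (v : seq A) : Prop :=
  match k with
  | 0 => v = [:: a]
  | k'.+1 => exists u, img_iter th k' a u /\ img th u v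
  end.

Definition subword (A : Type) (w u : seq A) : Prop :=
  exists p s, u = p ++ w ++ s.

Definition legal (A : Type) (th : rsubst A) (w : seq A) : Prop :=
  exists k a u, img_iter th k a u /\ subword w u.

Definition window (A : Type) (x : int -> A) (i : int) (n : nat) : seq A :=
  [seq x (i + (j%:Z))%R | j <- iota 0 n].

Definition in_subshift (A : Type) (th : rsubst A) (x : int -> A) : Prop :=
  forall i n, legal th (window x i n).

Definition lang (A : Type) (th : rsubst A) (w : seq A) : Prop :=
  exists x i, in_subshift th x /\ w = window x i (size w).

(* Semi-mixing with respect to S, a proper subset of L^l. *)
Definition semi_mixing (A : Type) (th : rsubst A) (l : nat) (S : seq A -> Prop) : Prop :=
  ((forall s, S s -> lang th s /\ size s = l) /\
   (exists v, lang th v /\ size v = l /\ ~ S v)) /\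
  (forall w, lang th w ->
     exists N, forall n, N <= n ->
       exists u s, size u = n /\ S s /\ lang th (w ++ u ++ s)).

Inductive ab := la | lb.
Inductive abc := ta | tb | tc.

Definition fib_rs : rsubst ab := fun x =>
  match x with
  | la => [:: [:: la; lb]; [:: lb; la]]
  | lb => [:: [:: la]]
  end.

Definition trib_rs : rsubst abc := fun x =>
  match x with
  | ta => [:: [:: ta; tb]; [:: tb; ta]]
  | tb => [:: [:: ta; tc]; [:: tc; ta]]
  | tc => [:: [:: ta]]
  end.

Definition metal_rs (m : nat) : rsubst ab := fun x =>
  match x with
  | la => [seq nseq i la ++ lb :: nseq (m - i) la | i <- iota 0 m.+1]
  | lb => [:: [:: la]]
  end.

(* Main.v *)
Require Import Defs.
From mathcomp Require Import all_boot all_order all_algebra zify.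
From Stdlib Require List.
Set Implicit Arguments. Unset Strict Implicit. Unset Printing Implicit Defensive.
Import GRing.Theory Num.Theory.

Fixpoint imgs (A:Type) (th:rsubst A) k (w v : seq A) : Prop :=
  match k with 0 => v = w | k'.+1 => exists u, imgs th k' w u /\ img th u v end.

Lemma img_cat A (th : rsubst A) w1 w2 v1 v2 :
  img th w1 v1 -> img th w2 v2 -> img th (w1++w2) (v1++v2).
Proof.
elim: w1 v1 => [|a w IH] v1 /=; first by move=> ->.
move=> [u [v' [Hu [-> Hw]]]] H2. exists u, (v' ++ v2). split=>//. split.
  by rewrite catA.
exact: IH.
Qed.

Lemma imgs_cat A (th : rsubst A) k w1 w2 v1 v2 :
  imgs th k w1 v1 -> imgs th k w2 v2 -> imgs th k (w1++w2) (v1++v2).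
Proof.
elim: k v1 v2 => [|k IH] v1 v2 /=; first by move=> -> ->.
move=> [u1 [H1 H1']] [u2 [H2 H2']]. exists (u1++u2); split; [exact: IH | exact: img_cat].
Qed.

Lemma imgs_trans A (th : rsubst A) k1 k2 w u v :
  imgs th k1 w u -> imgs th k2 u v -> imgs th (k2 + k1) w v.
Proof.
move=> H1; elim: k2 v => [|k IH] v /=; first by move->.
move=> [u' [Hu Hv]]; rewrite ?addSn; exists u'; split; [exact: IH|exact: Hv].
Qed.

Lemma img_iter_imgs A (th : rsubst A) k a v : img_iter th k a v <-> imgs th k [:: a] v.
Proof.
elim: k v => [|k IH] v /=; first by [].
split=> [[u [Hu Hv]]|[u [Hu Hv]]]; exists u; split => //; exact/IH.
Qed.

Lemma subword_trans A (u v w : seq A) : subword u v -> subword v w -> subword u w.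
Proof.
move=> [p [s ->]] [p' [s' ->]]. exists (p' ++ p), (s ++ s'). by rewrite !catA.
Qed.

Lemma legal_sub A (th : rsubst A) (u w : seq A) : legal th w -> subword u w -> legal th u.
Proof.
move=> [k [a [t [Ht Hs]]]] Hu. exists k, a, t; split=>//; exact: subword_trans Hu Hs.
Qed.

Lemma legal1 A (th : rsubst A) c : legal th [:: c].
Proof. exists 0, c, [:: c]; split => //; by exists [::], [::]. Qed.

Definition Sm A (s : A -> seq A) (w : seq A) := flatten (map s w).

Lemma Sm_cat A (s : A -> seq A) u v : Sm s (u ++ v) = Sm s u ++ Sm s v.
Proof. by rewrite /Sm map_cat flatten_cat. Qed.

Lemma iter_Sm_cat A (s : A -> seq A) k u v :
  iter k (Sm s) (u ++ v) = iter k (Sm s) u ++ iter k (Sm s) v.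
Proof. elim: k => [|k IH] //=. by rewrite IH Sm_cat. Qed.

Lemma img_Sm A (th : rsubst A) s (Hs : forall e, List.In (s e) (th e)) w :
  img th w (Sm s w).
Proof. elim: w => [|a w IH] //=. by exists (s a), (Sm s w). Qed.

Lemma imgs_iter A (th : rsubst A) s (Hs : forall e, List.In (s e) (th e)) k w :
  imgs th k w (iter k (Sm s) w).
Proof.
elim: k => [|k IH] //=. exists (iter k (Sm s) w); split=>//; exact: img_Sm.
Qed.

Lemma size_Sm A (s : A -> seq A) (Hn : forall e, 0 < size (s e)) w :
  size w <= size (Sm s w).
Proof. elim: w => //= a w IH. rewrite /Sm /= size_cat -/(Sm s w). have := Hn a. lia. Qed.

Lemma size_iter_Sm A (s : A -> seq A) (Hn : forall e, 0 < size (s e)) k w :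
  size w <= size (iter k (Sm s) w).
Proof.
elim: k => //= k IH. apply: leq_trans IH _. exact: size_Sm.
Qed.

Lemma legal_img A (th : rsubst A) s (Hs : forall e, List.In (s e) (th e)) w v :
  legal th w -> img th w v -> legal th v.
Proof.
move=> [k [a [t [Ht [P [S Et]]]]]] Hv.
exists k.+1, a, (Sm s P ++ v ++ Sm s S); split; last by exists (Sm s P), (Sm s S).
exists t; split=>//. rewrite Et. apply: img_cat; first exact: img_Sm.
apply: img_cat=>//. exact: img_Sm.
Qed.

Lemma legal_imgs A (th : rsubst A) s (Hs : forall e, List.In (s e) (th e)) k w v :
  legal th w -> imgs th k w v -> legal th v.
Proof.
move=> Hw; elim: k v => [|k IH] v /=; first by move->.
move=> [u [Hu Hv]]. exact: (legal_img Hs (IH _ Hu) Hv).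
Qed.

Lemma flex A (th : rsubst A) s (d a0 : A) (Hs : forall e, List.In (s e) (th e))
  (Hn : forall e, 0 < size (s e))
  (Hf : forall e j, j < size (s e) ->
        exists u, List.In u (th e) /\ size u = size (s e) /\ nth d u j = a0) :
  forall y j, j < size y -> exists y', img th y y' /\ j < size y' /\ nth d y' j = a0.
Proof.
elim=> [|e r IH] j //= Hj.
case: (ltnP j (size (s e))) => Hje.
  have [u [Hu [Hsu Hnu]]] := Hf e j Hje.
  exists (u ++ Sm s r); split; first by exists u, (Sm s r); split=>//; split=>//; exact: img_Sm.
  rewrite size_cat nth_cat Hsu Hje -Hsu Hnu; split=>//. rewrite Hsu. lia.
have Hj' : j - size (s e) < size r by have := Hn e; lia.
have [y'' [Hy [Hs' Hn'']]] := IH _ Hj'.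
exists (s e ++ y''); split; first by exists (s e), y''.
rewrite size_cat nth_cat. have -> : (j < size (s e)) = false by lia. split; [lia|done].
Qed.

Fixpoint fam A (g0 : seq A) (FA FB : nat -> seq A) n :=
  match n with 0 => g0 | n'.+1 => FA n' ++ fam g0 FA FB n' ++ FB n' end.
Fixpoint off A (FA : nat -> seq A) n : nat :=
  match n with 0 => 0 | n'.+1 => size (FA n') + off FA n' end.
Fixpoint rof A (g0 : seq A) (FB : nat -> seq A) n : nat :=
  match n with 0 => size g0 | n'.+1 => rof g0 FB n' + size (FB n') end.

Lemma size_fam A (g0 : seq A) FA FB n :
  size (fam g0 FA FB n) = off FA n + rof g0 FB n.
Proof. elim: n => //= n IH. rewrite !size_cat IH. lia. Qed.

Lemma off_ge A (FA : nat -> seq A) (HA : forall k, 0 < size (FA k)) n : n <= off FA n.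
Proof. elim: n => //= n IH. have := HA n. lia. Qed.

Lemma rof_ge A g0 (FB : nat -> seq A) (HB : forall k, 0 < size (FB k)) n : n <= rof g0 FB n.
Proof. elim: n => //= n IH. have := HB n. lia. Qed.

Lemma off_mono A (FA : nat -> seq A) m e : off FA m <= off FA (e + m).
Proof. elim: e => //= e IH. rewrite ?addSn /=. lia. Qed.

Lemma rof_mono A g0 (FB : nat -> seq A) m e : rof g0 FB m <= rof g0 FB (e + m).
Proof. elim: e => //= e IH. rewrite ?addSn /=. lia. Qed.

Lemma stab A (d : A) g0 FA FB m e (j : int) :
  (- (off FA m)%:Z <= j)%R -> (j < (rof g0 FB m)%:Z)%R ->
  nth d (fam g0 FA FB (e + m)) (absz ((off FA (e+m))%:Z + j)%R)
  = nth d (fam g0 FA FB m) (absz ((off FA m)%:Z + j)%R).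
Proof.
move=> H1 H2. elim: e => [|e IH] //=.
rewrite ?addSn /=.
have Ho := off_mono FA m e. have Hr := rof_mono g0 FB m e.
have Hs := size_fam g0 FA FB (e + m).
move: Ho Hr Hs IH. set o := off FA (e + m). set r := rof g0 FB (e + m).
set F := fam g0 FA FB (e + m). set sa := FA (e + m). move=> Ho Hr Hs IH.
have -> : absz ((size sa + o)%:Z + j)%R
          = size sa + absz (o%:Z + j)%R by lia.
rewrite nth_cat ltnNge leq_addr /= addKn nth_cat.
have -> : absz (o%:Z + j)%R < size F by lia.
exact: IH.
Qed.

Section X.
Variables (A : Type) (d : A) (g0 : seq A) (FA FB : nat -> seq A).
Hypotheses (HA : forall k, 0 < size (FA k)) (HB : forall k, 0 < size (FB k)).

Definition famx (i : int) : A :=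
  nth d (fam g0 FA FB (absz i).+1) (absz ((off FA (absz i).+1)%:Z + i)%R).

Lemma xval m (i : int) : (- (off FA m)%:Z <= i)%R -> (i < (rof g0 FB m)%:Z)%R ->
  famx i = nth d (fam g0 FA FB m) (absz ((off FA m)%:Z + i)%R).
Proof.
move=> H1 H2. rewrite /famx.
set M := (absz i).+1.
have HM1 := off_ge HA M. have HM2 := rof_ge g0 HB M.
have H1' : (- (off FA M)%:Z <= i)%R by rewrite /M in HM1 *; lia.
have H2' : (i < (rof g0 FB M)%:Z)%R by rewrite /M in HM2 *; lia.
rewrite -(@stab A d g0 FA FB M m i H1' H2') -(@stab A d g0 FA FB m M i H1 H2).
by rewrite addnC.
Qed.

Lemma map_nth_iota (s : seq A) q n : q + n <= size s ->
  [seq nth d s (q + j) | j <- iota 0 n] = take n (drop q s).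
Proof.
move=> H. apply: (@eq_from_nth _ d).
  rewrite size_map size_iota size_takel // size_drop. lia.
move=> k; rewrite size_map size_iota => Hk.
rewrite (nth_map 0) ?size_iota // nth_iota // add0n nth_take // nth_drop //.
Qed.

Lemma window_fam m (i : int) n : (- (off FA m)%:Z <= i)%R -> (i + n%:Z <= (rof g0 FB m)%:Z)%R ->
  window famx i n = take n (drop (absz ((off FA m)%:Z + i)%R) (fam g0 FA FB m)).
Proof.
move=> H1 H2. have Hs := size_fam g0 FA FB m.
rewrite -map_nth_iota; last by lia.
rewrite /window. apply/eq_in_map => j; rewrite mem_iota add0n => /andP [_ Hj].
rewrite (xval (m:=m)); try lia.
congr nth. lia.
Qed.

Lemma fam_in_subshift (th : rsubst A) (Hl : forall n, legal th (fam g0 FA FB n)) :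
  in_subshift th famx.
Proof.
move=> i n. set m := (absz i + n).+1.
have Hm1 := off_ge HA m. have Hm2 := rof_ge g0 HB m.
rewrite (window_fam (m:=m)); try (rewrite /m in Hm1 Hm2 *; lia).
apply: legal_sub (Hl m) _.
exists (take (absz ((off FA m)%:Z + i)%R) (fam g0 FA FB m)),
  (drop n (drop (absz ((off FA m)%:Z + i)%R) (fam g0 FA FB m))).
by rewrite !cat_take_drop.
Qed.

Lemma fam_lang (th : rsubst A) (Hl : forall n, legal th (fam g0 FA FB n)) w m :
  subword w (fam g0 FA FB m) -> lang th w.
Proof.
move=> [P [Q E]].
have Hs := size_fam g0 FA FB m. rewrite E !size_cat in Hs.
exists famx, ((size P)%:Z - (off FA m)%:Z)%R. split; first exact: fam_in_subshift.
rewrite (window_fam (m:=m)); try lia.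
have -> : absz ((off FA m)%:Z + ((size P)%:Z - (off FA m)%:Z))%R = size P by lia.
by rewrite E drop_size_cat // take_size_cat.
Qed.
End X.
Section Main.
Variables (A : Type) (th : rsubst A) (sL sR : A -> seq A) (l r : A) (t t' : seq A).
Hypotheses (HsL : forall e, List.In (sL e) (th e)) (HsR : forall e, List.In (sR e) (th e))
  (HnL : forall e, 0 < size (sL e)) (HnR : forall e, 0 < size (sR e))
  (Hl : sL l = t ++ [:: l]) (Hr : sR r = r :: t') (Ht : 0 < size t) (Ht' : 0 < size t')
  (Hlr : legal th [:: l; r]).

Definition FA n := iter n (Sm sL) t.
Definition FB n := iter n (Sm sR) t'.
Definition base := fam [:: l; r] FA FB.

Lemma HFA k : 0 < size (FA k).
Proof. apply: leq_trans Ht _. exact: size_iter_Sm. Qed.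
Lemma HFB k : 0 < size (FB k).
Proof. apply: leq_trans Ht' _. exact: size_iter_Sm. Qed.

Lemma base_eq n : base n = iter n (Sm sL) [:: l] ++ iter n (Sm sR) [:: r].
Proof.
elim: n => [|n IH] //. rewrite /base /= -/(base n) IH.
rewrite -(iterS n (Sm sL)) -(iterS n (Sm sR)) !iterSr.
have -> : Sm sL [:: l] = t ++ [:: l] by rewrite /Sm /= cats0 Hl.
have -> : Sm sR [:: r] = [:: r] ++ t' by rewrite /Sm /= cats0 Hr.
rewrite !iter_Sm_cat /FA /FB. by rewrite !catA.
Qed.

Lemma base_legal n : legal th (base n).
Proof.
rewrite base_eq. apply: (legal_imgs HsL (k:=n) Hlr).
rewrite -cat1s. apply: imgs_cat; exact: imgs_iter.
Qed.

Lemma lang_legal w : lang th w -> legal th w.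
Proof. move=> [x [i [Hx ->]]]. exact: Hx. Qed.

Hypothesis Hocc : forall c, exists m P Q, base m = P ++ c :: Q.

Lemma legal_lang w : legal th w -> lang th w.
Proof.
move=> [k [c [v [Hv Hw]]]]. move/img_iter_imgs in Hv.
have [m [P [Q E]]] := Hocc c.
pose T := iter k (Sm sR).
pose h0 := T P ++ v ++ T Q.
pose HA := fun n => T (FA (m + n)).
pose HB := fun n => T (FB (m + n)).
have Himg : forall n, imgs th k (base (m+n)) (fam h0 HA HB n).
  elim=> [|n IH].
    rewrite addn0 E /= -cat1s. apply: imgs_cat; first exact: imgs_iter.
    apply: imgs_cat => //; exact: imgs_iter.
  rewrite addnS /base /= -/(base (m+n)). apply: imgs_cat; first exact: imgs_iter.
  apply: imgs_cat => //; exact: imgs_iter.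
have HHA : forall k, 0 < size (HA k).
  move=> n; apply: leq_trans (HFA (m+n)) _; exact: size_iter_Sm.
have HHB : forall k, 0 < size (HB k).
  move=> n; apply: leq_trans (HFB (m+n)) _; exact: size_iter_Sm.
apply: (@fam_lang A l h0 HA HB HHA HHB th _ w 0).
  move=> n. have := base_legal (m+n). move/legal_imgs. apply. exact: HsR. exact: Himg.
apply: subword_trans Hw _. by exists (T P), (T Q).
Qed.

Hypothesis Hletimg : forall c, exists c' P Q, List.In (P ++ c :: Q) (th c').

Lemma semi_gen (a0 b0 : A) (Hab : b0 <> a0)
  (Hflex : forall e j, j < size (sR e) ->
     exists u, List.In u (th e) /\ size u = size (sR e) /\ nth l u j = a0) :
  semi_mixing th 1 (fun s => s = [:: a0]).
Proof.
split; first split.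
- by move=> s ->; split=> //; apply: legal_lang; exact: legal1.
- exists [:: b0]; split; first exact/legal_lang/legal1.
  by split=> // [[]].
move=> w /lang_legal [k [c [v [Hv [P1 [Q1 Ev]]]]]].
move/img_iter_imgs in Hv.
have [c' [P [Q Hin]]] := Hletimg c.
have H1 : imgs th 1 [:: c'] (P ++ c :: Q).
  exists [:: c']; split => //. exists (P ++ c :: Q), [::]; split => //. by rewrite cats0.
pose T := iter k (Sm sR).
have H2 : imgs th k (P ++ c :: Q) (T P ++ v ++ T Q).
  rewrite -cat1s. apply: imgs_cat; first exact: imgs_iter.
  apply: imgs_cat => //; exact: imgs_iter.
have H3 := imgs_trans H1 H2. rewrite addn1 in H3.
pose Q2 := Q1 ++ T Q.
have Et2 : T P ++ v ++ T Q = (T P ++ P1) ++ w ++ Q2 by rewrite Ev /Q2 !catA.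
exists (size Q2) => n Hn.
have [x [i [Hx Ex]]] : lang th [:: c'] by apply: legal_lang; exact: legal1.
have Hleg := Hx i n.+2.
pose y := [seq x (i + (j%:Z))%R | j <- iota 1 n.+1].
have Ew : window x i n.+2 = c' :: y.
  rewrite /window /=. move: Ex; rewrite /window /= => [[<-]]. by [].
rewrite Ew in Hleg.
have Hy0 := imgs_iter HsR k y.
have Hsy : n.+1 <= size (iter k (Sm sR) y).
  have := size_iter_Sm HnR k y. by rewrite /y size_map size_iota.
pose j := n - size Q2.
have [y' [Hy' [Hj Hnth]]] := flex HsR HnR Hflex (y := iter k (Sm sR) y) (j := j) ltac:(rewrite /j; lia).
have H4 : imgs th k.+1 y y' by exists (iter k (Sm sR) y).
have H5 := imgs_cat H3 H4. rewrite cat1s in H5.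
have Hleg2 := legal_imgs HsR Hleg H5.
exists (Q2 ++ take j y'), [:: a0]; split.
  rewrite size_cat size_takel; [rewrite /j; lia | exact: ltnW].
split => //. apply: legal_lang. apply: legal_sub Hleg2 _.
exists (T P ++ P1), (drop j.+1 y').
rewrite Et2. rewrite -{1}(cat_take_drop j y') (drop_nth l Hj) Hnth.
by rewrite -!catA.
Qed.
End Main.
Definition fibL (e : ab) := match e with la => [:: lb; la] | lb => [:: la] end.
Definition fibR (e : ab) := match e with la => [:: la; lb] | lb => [:: la] end.

Lemma fib_semi : semi_mixing fib_rs 1 (fun s => s = [:: la]).
Proof.
apply: (@semi_gen ab fib_rs fibL fibR la la [:: lb] [:: lb] _ _ _ _ _ _ _ _ _ _ _ la lb) => //.
- by case=> /=; auto.
- by case=> /=; auto.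
- by case.
- by case.
- exists 2, la, [:: la; la; lb]. split; last by exists [::], [:: lb].
  exists [:: lb; la]. split.
    exists [:: la]; split => //. exists [:: lb; la], [::]. by simpl; auto.
  exists [:: la], [:: la; lb]. split; first by simpl; auto. split => //.
  exists [:: la; lb], [::]. by simpl; auto.
- case.
  + by exists 0, [::], [:: la].
  + by exists 1, [::], [:: la; la; lb].
- case.
  + exists lb, [::], [::]. by simpl; auto.
  + exists la, [:: la], [::]. by simpl; auto.
- case=> /= -[|[|j]] //= _.
  + exists [:: la; lb]. by simpl; auto.
  + exists [:: lb; la]. by simpl; auto.
  + exists [:: la]. by simpl; auto.
Qed.
Definition triL (e : abc) := match e with ta => [:: tb; ta] | tb => [:: tc; ta] | tc => [:: ta] end.
Definition triR (e : abc) := match e with ta => [:: ta; tb] | tb => [:: ta; tc] | tc => [:: ta] end.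

Lemma trib_semi : semi_mixing trib_rs 1 (fun s => s = [:: ta]).
Proof.
apply: (@semi_gen abc trib_rs triL triR ta ta [:: tb] [:: tb] _ _ _ _ _ _ _ _ _ _ _ ta tb) => //.
- by case=> /=; auto.
- by case=> /=; auto.
- by case.
- by case.
- exists 2, ta, [:: tc; ta; ta; tb]. split; last by exists [:: tc], [:: tb].
  exists [:: tb; ta]. split.
    exists [:: ta]; split => //. exists [:: tb; ta], [::]. by simpl; auto.
  exists [:: tc; ta], [:: ta; tb]. split; first by simpl; auto. split => //.
  exists [:: ta; tb], [::]. by simpl; auto.
- case.
  + by exists 0, [::], [:: ta].
  + by exists 1, [::], [:: ta; ta; tb].
  + by exists 2, [::], [:: ta; tb; ta; ta; tb; ta; tc].
- case.
  + exists tc, [::], [::]. by simpl; auto.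
  + exists ta, [:: ta], [::]. by simpl; auto.
  + exists tb, [:: ta], [::]. by simpl; auto.
- case=> /= -[|[|j]] //= _.
  + exists [:: ta; tb]. by simpl; auto.
  + exists [:: tb; ta]. by simpl; auto.
  + exists [:: ta; tc]. by simpl; auto.
  + exists [:: tc; ta]. by simpl; auto.
  + exists [:: ta]. by simpl; auto.
Qed.

Lemma In_map_iota (T : Type) (f : nat -> T) n s k : s <= k < s + n ->
  List.In (f k) [seq f i | i <- iota s n].
Proof.
elim: n s => [|n IH] s /= H; first lia.
case: (eqVneq k s) => [->|Hks]; first by left.
right. apply: IH. lia.
Qed.

Lemma nseqSr (T : Type) n (x : T) : nseq n.+1 x = nseq n x ++ [:: x].
Proof. by elim: n => //= n <-. Qed.

Lemma metal_semi m : 2 <= m -> semi_mixing (metal_rs m) 1 (fun s => s = [:: la]).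
Proof.
case: m => [|[|m']] // _.
pose M := m'.+2.
pose f := fun i => nseq i la ++ lb :: nseq (M - i) la.
pose sL := fun e => match e with la => f 0 | lb => [:: la] end.
pose sR := fun e => match e with la => f M | lb => [:: la] end.
have Hin : forall i, i <= M -> List.In (f i) (metal_rs M la).
  move=> i Hi. apply: (In_map_iota f). lia.
apply: (@semi_gen ab (metal_rs M) sL sR la la (lb :: nseq m'.+1 la)
          (nseq m'.+1 la ++ lb :: nseq (M - M) la) _ _ _ _ _ _ _ _ _ _ _ la lb) => //.
- case; [exact: Hin | by simpl; auto].
- case; [exact: Hin | by simpl; auto].
- by case => //=; rewrite size_cat.
- by case => //=; rewrite size_cat.
- by rewrite /sL /f subn0 /M nseqSr.
- exists 1, la, (f 0). split; last by exists [:: lb], (nseq m' la); rewrite /f subn0.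
  exists [:: la]; split => //. exists (f 0), [::]. split; [exact: Hin | by rewrite cats0].
- case.
  + by exists 0, [::], [:: la].
  + by exists 1, [::], (nseq m'.+1 la ++ [:: la; la] ++ (nseq m'.+1 la ++ lb :: nseq (M - M) la)).
- case.
  + exists lb, [::], [::]. by simpl; auto.
  + exists la, [::], (nseq (M - 0) la). exact: (Hin 0).
- case => j /=.
  + rewrite /f size_cat size_nseq /= size_nseq subnn addn1 ltnS leq_eqVlt => /orP [/eqP ->|Hj].
      exists (f 0); split; first exact: Hin.
      rewrite /f /= !size_nseq ?subn0 ?subnn ?addn1; split => //.
      by change (la :: nseq m' la) with (nseq m'.+1 la); rewrite nth_nseq ltnSn.
    exists (f M); split; first exact: Hin. split.
      by rewrite /f size_cat size_nseq /M subnn /= addn1.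
    by rewrite /f nth_cat size_nseq /M Hj nth_nseq Hj.
  + case: j => // _. exists [:: la]. by simpl; auto.
Qed.

Theorem mainTheorem2 :
  semi_mixing fib_rs 1 (fun s => s = [:: la]) /\
  semi_mixing trib_rs 1 (fun s => s = [:: ta]) /\
  (forall m : nat, 2 <= m -> semi_mixing (metal_rs m) 1 (fun s => s = [:: la])).
Proof.
split; first exact: fib_semi.
split; first exact: trib_semi.
exact: metal_semi.
Qed.
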